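(* Assume $V$ satisfies Assumptions A1 and A2, let $\delta$ satisfy the step-size condition (S), and let $c=(1-\gamma\delta/2)/(1-\gamma\delta)$. For the underdamped Langevin algorithm with step size $\delta$, let $\tau_k=(1-\gamma\delta)\rho_k-\delta\nabla V(\xi_k)$. Then there exist constants $\varepsilon=\varepsilon(\delta)>0$ and $C_1=C_1(\delta)>0$ such that for all $k\ge0$ (almost surely), \[ \Gamma_c(\xi_{k+1},\tau_k)\le(1-\varepsilon\gamma\delta)\,\Gamma_c(\xi_k,\rho_k)+C_1 . \]
   Context: Fix integers $r\ge1$ and a constant $\gamma>0$. A map has polynomial growth if $\Vert\phi(x)\Vert\le C(1+\Vert x\Vert^m)$ for some $C>0$, integer $m\ge0$ and all $x$; $\mathscr{C}^\infty_{poly}$ denotes infinitely differentiable maps with the map and all derivatives of polynomial growth. Norms of matrices are operator norms. Assumption A1: (a) $V(x)\ge0$ for all $x\in\mathbb{R}^r$; (b) $\Vert\nabla^2V(x)\Vert\le\nu$ for some constant $\nu>0$ and all $x$; (c) $V\in\mathscr{C}^\infty_{poly}$. Assumption A2: there exist constants $\alpha>0$ and $0<\beta<1$ such that for all $x\in\mathbb{R}^r$, $\frac12\langle\nabla V(x),x\rangle\ge\beta V(x)+\gamma^2C_\beta\Vert x\Vert^2-\alpha$, where $C_\beta=\frac{\beta(2-\beta)}{8(1-\beta)}$. Step-size condition (S): $0<\delta\le\min\{1/\gamma,\ \gamma/(2\nu),\ (D+1-\sqrt{D^2+1})/\gamma\}$ with $D=\gamma^4C_\beta/\nu^2$. Underdamped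 Langevin algorithm: $\xi_{k+1}=\xi_k+\delta\rho_k$, $\rho_{k+1}=(1-\gamma\delta)\rho_k-\delta\nabla V(\xi_k)+\sqrt{2\gamma\delta}\,\eta_k$, where $\eta_0,\eta_1,\dots$ are i.i.d. $N(0,I_r)$ and $\eta_k$ is independent of $(\xi_j,\rho_j)_{j\le k}$; the initial values $\xi_0,\rho_0$ are deterministic. For $c>1$ and $x,y\in\mathbb{R}^r$, $\Gamma_c(x,y)=\frac{\gamma^2}{4}\Vert x\Vert^2+V(x)+\frac{\gamma}{2}\langle x,y\rangle+\frac c2\Vert y\Vert^2+1$. *)

(* Defs.v *)
From Stdlib Require Import Reals Lra List.
Import ListNotations.
Open Scope R_scope.

(* Vectors of R^r are represented as functions nat -> R of which only the
   coordinates 0..r-1 are meaningful; all norms/inner products below only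
   look at these coordinates. *)
Definition vec := nat -> R.

Fixpoint rsum (n : nat) (f : nat -> R) : R :=
  match n with O => 0 | S m => rsum m f + f m end.

Definition dot (r : nat) (x y : vec) : R := rsum r (fun i => x i * y i).
Definition norm (r : nat) (x : vec) : R := sqrt (dot r x x).
Definition vadd (x y : vec) : vec := fun i => x i + y i.
Definition vsub (x y : vec) : vec := fun i => x i - y i.
Definition vscale (a : R) (x : vec) : vec := fun i => a * x i.

Definition has_gradient (r : nat) (f : vec -> R) (g : vec -> vec) : Prop :=
  forall x eps, 0 < eps -> exists d, 0 < d /\
    forall y, norm r (vsub y x) < d ->
      Rabs (f y - f x - dot r (g x) (vsub y x)) <= eps * norm r (vsub y x).

(* D is the family of all iterated partial derivatives of f:
   D [] = f and D (i :: l) = d/dx_i (D l), each D l being differentiable.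
   Hence f is infinitely differentiable. *)
Definition smooth_family (r : nat) (f : vec -> R) (D : list nat -> vec -> R) : Prop :=
  D [] = f /\ forall l, has_gradient r (D l) (fun x i => D (i :: l) x).

Definition poly_growth (r : nat) (g : vec -> R) : Prop :=
  exists (C : R) (m : nat), 0 < C /\ forall x, Rabs (g x) <= C * (1 + norm r x ^ m).

Definition Cinf_poly (r : nat) (f : vec -> R) (D : list nat -> vec -> R) : Prop :=
  smooth_family r f D /\
  forall l, Forall (fun i => (i < r)%nat) l -> poly_growth r (D l).

Definition grad (D : list nat -> vec -> R) (x : vec) : vec := fun i => D [i] x.

Definition hess_app (r : nat) (D : list nat -> vec -> R) (x u : vec) : vec :=
  fun i => rsum r (fun j => D [i; j] x * u j).

Definition AssumptionA1 (r : nat) (V : vec -> R) (D : list nat -> vec -> R) (nu : R) : Prop :=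
  (forall x, 0 <= V x) /\
  (0 < nu /\ forall x u, norm r (hess_app r D x u) <= nu * norm r u) /\
  Cinf_poly r V D.

Definition Cbeta (beta : R) : R := beta * (2 - beta) / (8 * (1 - beta)).

Definition AssumptionA2 (r : nat) (V : vec -> R) (D : list nat -> vec -> R)
    (gamma alpha beta : R) : Prop :=
  0 < alpha /\ 0 < beta < 1 /\
  forall x, / 2 * dot r (grad D x) x >=
            beta * V x + gamma ^ 2 * Cbeta beta * norm r x ^ 2 - alpha.

Definition step_cond (gamma nu beta delta : R) : Prop :=
  let Dc := gamma ^ 4 * Cbeta beta / nu ^ 2 in
  0 < delta /\ delta <= / gamma /\ delta <= gamma / (2 * nu) /\
  delta <= (Dc + 1 - sqrt (Dc ^ 2 + 1)) / gamma.

(* Underdamped Langevin trajectory for a noise realization eta. *)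
Fixpoint uld (D : list nat -> vec -> R) (gamma delta : R) (xi0 rho0 : vec)
    (eta : nat -> vec) (k : nat) : vec * vec :=
  match k with
  | O => (xi0, rho0)
  | S j =>
      let (xi, rho) := uld D gamma delta xi0 rho0 eta j in
      (vadd xi (vscale delta rho),
       fun i => (1 - gamma * delta) * rho i - delta * grad D xi i
                + sqrt (2 * gamma * delta) * eta j i)
  end.

Definition Gamma (r : nat) (V : vec -> R) (gamma c : R) (x y : vec) : R :=
  gamma ^ 2 / 4 * norm r x ^ 2 + V x + gamma / 2 * dot r x y
  + c / 2 * norm r y ^ 2 + 1.

(* Main.v *)
Require Import Defs.
From Stdlib Require Import Reals Lra List FunctionalExtensionality.
Import ListNotations.
Open Scope R_scope.

Lemma rsum_ext n f g : (forall i, f i = g i) -> rsum n f = rsum n g.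
Proof. intros H; induction n; simpl; [reflexivity| rewrite IHn, H; reflexivity]. Qed.

Lemma rsum_plus n f g : rsum n (fun i => f i + g i) = rsum n f + rsum n g.
Proof. induction n; simpl; [ring| rewrite IHn; ring]. Qed.

Lemma rsum_scal n a f : rsum n (fun i => a * f i) = a * rsum n f.
Proof. induction n; simpl; [ring| rewrite IHn; ring]. Qed.

Lemma rsum_le n f g : (forall i, f i <= g i) -> rsum n f <= rsum n g.
Proof. intros H; induction n; simpl; [lra| specialize (H n); lra]. Qed.

Lemma rsum_swap n m (f : nat -> nat -> R) :
  rsum n (fun j => rsum m (fun i => f i j)) = rsum m (fun i => rsum n (fun j => f i j)).
Proof.
  induction n; simpl.
  - induction m; simpl; [reflexivity| rewrite <- IHm; ring].
  - rewrite IHn, <- rsum_plus. reflexivity.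
Qed.

Lemma dot_nonneg r x : 0 <= dot r x x.
Proof. unfold dot; induction r; simpl; [lra| nra]. Qed.

Lemma norm_sq r x : norm r x ^ 2 = dot r x x.
Proof. unfold norm. simpl. rewrite Rmult_1_r. apply sqrt_sqrt, dot_nonneg. Qed.

Lemma norm_nonneg r x : 0 <= norm r x.
Proof. unfold norm; apply sqrt_pos. Qed.

Lemma dot_amgm r x y s : 0 < s -> 2 * dot r x y <= s * dot r x x + / s * dot r y y.
Proof.
  intros Hs. unfold dot. induction r; simpl; [lra|].
  assert (2 * (x r * y r) <= s * (x r * x r) + / s * (y r * y r)).
  { assert (0 <= (s * x r - y r) * (s * x r - y r) / s).
    { apply Rmult_le_pos; [apply Rle_0_sqr| left; apply Rinv_0_lt_compat; lra]. }
    assert ((s * x r - y r) * (s * x r - y r) / s = s * (x r * x r) + / s * (y r * y r) - 2 * (x r * y r)) by (field; lra).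
    lra. }
  lra.
Qed.

Lemma norm_scale r h u : norm r (vscale h u) = Rabs h * norm r u.
Proof.
  unfold norm.
  replace (dot r (vscale h u) (vscale h u)) with (h² * dot r u u).
  - rewrite sqrt_mult_alt by apply Rle_0_sqr. rewrite sqrt_Rsqr_abs. reflexivity.
  - unfold dot, vscale, Rsqr. rewrite <- rsum_scal. apply rsum_ext; intros; ring.
Qed.

Lemma dot_scale_r r g h u : dot r g (vscale h u) = h * dot r g u.
Proof. unfold dot, vscale. rewrite <- rsum_scal. apply rsum_ext; intros; ring. Qed.

Lemma rsum_minus n f g : rsum n (fun i => f i - g i) = rsum n f - rsum n g.
Proof. induction n; simpl; [ring| rewrite IHn; ring]. Qed.

Definition pt (x u : vec) (t : R) : vec := vadd x (vscale t u).

Lemma deriv_line r F G' x u t : has_gradient r F G' ->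
  derivable_pt_lim (fun s => F (pt x u s)) t (dot r (G' (pt x u t)) u).
Proof.
  intros HG eps Heps.
  set (nu := norm r u).
  assert (Hnu : 0 <= nu) by apply norm_nonneg.
  destruct (HG (pt x u t) (eps / (2 * (nu + 1)))) as [d [Hd Hy]].
  { apply Rdiv_lt_0_compat; lra. }
  assert (Hdl : 0 < d / (nu + 1)) by (apply Rdiv_lt_0_compat; lra).
  exists (mkposreal _ Hdl). simpl. intros h Hh0 Hh.
  assert (Hdiff : vsub (pt x u (t + h)) (pt x u t) = vscale h u).
  { apply functional_extensionality; intro i; unfold vsub, pt, vadd, vscale; ring. }
  specialize (Hy (pt x u (t + h))). rewrite Hdiff, norm_scale, dot_scale_r in Hy.
  fold nu in Hy.
  assert (Hah : 0 < Rabs h) by (apply Rabs_pos_lt; auto).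
  assert (Hlt : Rabs h * nu < d).
  { apply Rmult_lt_compat_r with (r := nu + 1) in Hh; [|lra].
    unfold Rdiv in Hh. rewrite Rmult_assoc, Rinv_l in Hh by lra. nra. }
  specialize (Hy Hlt).
  replace ((F (pt x u (t + h)) - F (pt x u t)) / h - dot r (G' (pt x u t)) u)
    with ((F (pt x u (t + h)) - F (pt x u t) - h * dot r (G' (pt x u t)) u) / h)
    by (field; auto).
  unfold Rdiv at 1. rewrite Rabs_mult, Rabs_inv.
  apply Rmult_le_compat_r with (r := / Rabs h) in Hy; [|left; apply Rinv_0_lt_compat; auto].
  eapply Rle_lt_trans; [exact Hy|].
  replace (eps / (2 * (nu + 1)) * (Rabs h * nu) * / Rabs h) with (eps * nu / (2 * (nu + 1))) by (field; lra).
  apply Rmult_lt_reg_r with (r := 2 * (nu + 1)); [lra|].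
  unfold Rdiv. rewrite Rmult_assoc, Rinv_l by lra. nra.
Qed.

Lemma deriv_rsum n (f : nat -> R -> R) (f' : nat -> R) t :
  (forall j, derivable_pt_lim (f j) t (f' j)) ->
  derivable_pt_lim (fun s => rsum n (fun j => f j s)) t (rsum n f').
Proof.
  intros H. induction n; simpl.
  - exact (derivable_pt_lim_const 0 t).
  - exact (derivable_pt_lim_plus _ _ _ _ _ IHn (H n)).
Qed.

Lemma deriv_mulc f l c t : derivable_pt_lim f t l -> derivable_pt_lim (fun s => f s * c) t (l * c).
Proof.
  intros H. assert (H2 := derivable_pt_lim_mult f (fct_cte c) t l 0 H (derivable_pt_lim_const c t)).
  unfold fct_cte in H2. replace (l * c) with (l * c + f t * 0) by ring. exact H2.
Qed.

Lemma deriv_grad r V D x u w t : smooth_family r V D ->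
  derivable_pt_lim (fun s => dot r (grad D (pt x u s)) w) t
    (dot r u (hess_app r D (pt x u t) w)).
Proof.
  intros [_ HD].
  replace (dot r u (hess_app r D (pt x u t) w)) with
    (rsum r (fun j => dot r (fun i => D [i; j] (pt x u t)) u * w j)).
  - unfold dot at 1, grad. apply deriv_rsum. intros j.
    apply deriv_mulc. exact (deriv_line r (D [j]) (fun y i => D [i; j] y) x u t (HD [j])).
  - unfold dot, hess_app.
    transitivity (rsum r (fun j => rsum r (fun i => u i * (D [i; j] (pt x u t) * w j)))).
    + apply rsum_ext; intro j. rewrite Rmult_comm, <- rsum_scal. apply rsum_ext; intro; ring.
    + rewrite rsum_swap. apply rsum_ext; intro i. rewrite <- rsum_scal. reflexivity.
Qed.

Lemma hess_bound r V D nu y u w s : AssumptionA1 r V D nu -> 0 < s ->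
  2 * dot r u (hess_app r D y w) <= s * dot r u u + / s * nu ^ 2 * dot r w w.
Proof.
  intros [_ [[Hnu HH] _]] Hs.
  pose proof (dot_amgm r u (hess_app r D y w) s Hs).
  assert (dot r (hess_app r D y w) (hess_app r D y w) <= nu ^ 2 * dot r w w).
  { rewrite <- !norm_sq. specialize (HH y w).
    pose proof (norm_nonneg r (hess_app r D y w)). pose proof (norm_nonneg r w).
    replace (nu ^ 2 * norm r w ^ 2) with ((nu * norm r w) ^ 2) by ring.
    apply pow_incr; lra. }
  assert (0 < / s) by (apply Rinv_0_lt_compat; lra).
  nra.
Qed.

Lemma pt0 x u : pt x u 0 = x.
Proof. apply functional_extensionality; intro; unfold pt, vadd, vscale; ring. Qed.

Lemma deriv_V r V D x u t : smooth_family r V D ->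
  derivable_pt_lim (fun s => V (pt x u s)) t (dot r (grad D (pt x u t)) u).
Proof.
  intros [H0 HD]. rewrite <- H0. exact (deriv_line r (D []) _ x u t (HD [])).
Qed.

Lemma taylor r V D nu x u : AssumptionA1 r V D nu ->
  V (pt x u 1) <= V x + dot r (grad D x) u + nu / 2 * dot r u u.
Proof.
  intros HA. pose proof HA as [_ [[Hnu _] [HS _]]].
  set (a := dot r (grad D x) u). set (U := dot r u u).
  set (phi := fun t => V (pt x u t) - t * a - (t * t) * U * (nu / 2)).
  set (phi' := fun t => dot r (grad D (pt x u t)) u - a - nu * t * U).
  assert (Hd : forall t, derivable_pt_lim phi t (phi' t)).
  { intros t. unfold phi, phi'.
    assert (H1 := deriv_V r V D x u t HS).
    assert (H2 := deriv_mulc id 1 a t (derivable_pt_lim_id t)).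
    assert (H3 := derivable_pt_lim_mult id id t 1 1 (derivable_pt_lim_id t) (derivable_pt_lim_id t)).
    assert (H4 := deriv_mulc _ _ U t H3).
    assert (H5 := deriv_mulc _ _ (nu/2) t H4).
    assert (H6 := derivable_pt_lim_minus _ _ _ _ _ H1 H2).
    assert (H7 := derivable_pt_lim_minus _ _ _ _ _ H6 H5).
    unfold id in H7.
    replace (dot r (grad D (pt x u t)) u - a - nu * t * U) with
      (dot r (grad D (pt x u t)) u - 1 * a - (1 * t + t * 1) * U * (nu / 2)) by field.
    exact H7. }
  destruct (MVT_cor2 phi phi' 0 1 Rlt_0_1 (fun c _ => Hd c)) as [c [Hc Hc01]].
  set (psi := fun t => dot r (grad D (pt x u t)) u).
  assert (Hpd : forall t, derivable_pt_lim psi t (dot r u (hess_app r D (pt x u t) u))).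
  { intros t. exact (deriv_grad r V D x u u t HS). }
  destruct (MVT_cor2 psi _ 0 c (proj1 Hc01) (fun t _ => Hpd t)) as [d [Hdd Hd0]].
  assert (Hb := hess_bound r V D nu (pt x u d) u u nu HA Hnu).
  fold U in Hb.
  replace (/ nu * nu ^ 2) with nu in Hb by (field; lra).
  unfold phi, phi', psi in *. rewrite pt0 in *. fold a in Hdd.
  assert (dot r (grad D (pt x u c)) u - a <= nu * U * c) by nra.
  nra.
Qed.

Definition z0 : vec := fun _ => 0.

Lemma grad_growth r V D nu x : AssumptionA1 r V D nu ->
  dot r (grad D x) (grad D x) <= 3 * dot r (grad D z0) (grad D z0) + 3 / 2 * nu ^ 2 * dot r x x.
Proof.
  intros HA. pose proof HA as [_ [[Hnu _] [HS _]]].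
  set (e := vsub (grad D x) (grad D z0)).
  set (psi := fun t => dot r (grad D (pt z0 x t)) e).
  destruct (MVT_cor2 psi _ 0 1 Rlt_0_1 (fun t _ => deriv_grad r V D z0 x e t HS)) as [c [Hc _]].
  assert (Hb := hess_bound r V D nu (pt z0 x c) x e (nu ^ 2) HA ltac:(apply pow_lt; lra)).
  replace (/ nu ^ 2 * nu ^ 2) with 1 in Hb by (field; lra).
  assert (Hp1 : pt z0 x 1 = x).
  { apply functional_extensionality; intro; unfold pt, z0, vadd, vscale; ring. }
  unfold psi in Hc. rewrite Hp1, pt0 in Hc.
  assert (HE : dot r (grad D x) e - dot r (grad D z0) e = dot r e e).
  { unfold dot. rewrite <- rsum_minus. apply rsum_ext; intro i.
    unfold e, vsub. ring. }
  assert (HEb : dot r e e <= nu ^ 2 * dot r x x) by nra.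
  assert (Hg : dot r (grad D x) (grad D x) = dot r (grad D z0) (grad D z0) + 2 * dot r (grad D z0) e + dot r e e).
  { unfold dot. rewrite <- rsum_scal, <- !rsum_plus. apply rsum_ext; intro i.
    unfold e, vsub. ring. }
  assert (Ham := dot_amgm r (grad D z0) e 2 ltac:(lra)).
  lra.
Qed.

Lemma mulle k x y : 0 <= k -> x <= y -> k * x <= k * y.
Proof. intros; apply Rmult_le_compat_l; auto. Qed.

Lemma final_ineq (gamma delta nu beta alpha Cb c eps X P xp xg pg G G0 v Vy : R) :
  0 < gamma -> 0 < delta -> gamma * delta < 1 ->
  c * (1 - gamma * delta) = 1 - gamma * delta / 2 ->
  c >= 1 + gamma * delta / 2 ->
  nu * delta <= gamma / 2 -> 0 < nu ->
  c * delta ^ 2 * nu ^ 2 <= gamma * delta * gamma ^ 2 * Cb ->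
  0 < eps -> eps <= Cb / 2 -> eps <= beta -> eps * (2 * c + 1) <= 1 ->
  0 <= X -> 0 <= P -> 0 <= v -> 0 <= G0 ->
  Vy <= v + delta * pg + nu / 2 * delta ^ 2 * P ->
  xg / 2 >= beta * v + gamma ^ 2 * Cb * X - alpha ->
  G <= 3 * G0 + 3 / 2 * nu ^ 2 * X ->
  gamma * xp <= (gamma ^ 2 * X + P) / 2 ->
  gamma ^ 2 / 4 * (X + 2 * delta * xp + delta ^ 2 * P) + Vy
  + gamma / 2 * ((1 - gamma * delta) * xp - delta * xg + delta * (1 - gamma * delta) * P - delta ^ 2 * pg)
  + c / 2 * ((1 - gamma * delta) ^ 2 * P - 2 * delta * (1 - gamma * delta) * pg + delta ^ 2 * G) + 1
  <= (1 - eps * gamma * delta) * (gamma ^ 2 / 4 * X + v + gamma / 2 * xp + c / 2 * P + 1)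
     + (1 + gamma * delta * alpha + 3 / 2 * c * delta ^ 2 * G0).
Proof.
  intros Hg Hd Ha1 Hc Hc2 Hnd Hnu HD He HeC Heb He2 HX HP Hv HG0 HT HA2 HG Hxp.
  assert (Ha : 0 < gamma * delta) by (apply Rmult_lt_0_compat; lra).
  assert (Hc0 : 0 < c) by lra.
  assert (F1 := mulle (gamma * delta) _ _ ltac:(lra) (Rge_le _ _ HA2)).
  assert (F2 := mulle (c * delta ^ 2 / 2) _ _ ltac:(apply Rmult_le_pos; [apply Rmult_le_pos; [lra| apply pow_le; lra]| lra]) HG).
  assert (F4 : c * (1 - gamma * delta) * (delta * pg) = (1 - gamma * delta / 2) * (delta * pg)) by (rewrite Hc; ring).
  assert (F5 : c * (1 - gamma * delta) * ((1 - gamma * delta) * P) = (1 - gamma * delta / 2) * ((1 - gamma * delta) * P)) by (rewrite Hc; ring).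
  assert (F6 := mulle P _ _ HP (Rge_le _ _ Hc2)).
  assert (F7 := mulle (delta * P / 2) _ _ ltac:(apply Rmult_le_pos; [apply Rmult_le_pos; lra| lra]) Hnd).
  assert (F8 := mulle (gamma * delta * P) _ _ ltac:(apply Rmult_le_pos; lra) He2).
  assert (F9 := mulle (3/4 * X) _ _ ltac:(lra) HD).
  assert (F10 := mulle (gamma * delta * gamma ^ 2 * X / 2) _ _ ltac:(apply Rmult_le_pos; [apply Rmult_le_pos; [apply Rmult_le_pos; [lra| apply pow_le; lra]| lra]| lra]) HeC).
  assert (F11 := mulle (gamma * delta * v) _ _ ltac:(apply Rmult_le_pos; lra) Heb).
  assert (F12 := mulle (eps * gamma * delta / 2) _ _ ltac:(apply Rmult_le_pos; [apply Rmult_le_pos; [apply Rmult_le_pos; lra| lra]| lra]) Hxp).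
  assert (F13 : 0 <= eps * gamma * delta) by (apply Rmult_le_pos; [apply Rmult_le_pos|]; lra).
  assert (F14 : eps * gamma * delta <= 1).
  { assert (eps <= 1) by nra. assert (eps * (gamma * delta) <= 1 * 1) by (apply Rmult_le_compat; lra). lra. }
  lra.
Qed.

Lemma exp_yy r x p d : dot r (vadd x (vscale d p)) (vadd x (vscale d p)) =
  dot r x x + 2 * d * dot r x p + d ^ 2 * dot r p p.
Proof. unfold dot, vadd, vscale; induction r; simpl; [ring| rewrite IHr; ring]. Qed.

Lemma exp_yt r x p g d a : dot r (vadd x (vscale d p)) (fun i => (1 - a) * p i - d * g i) =
  (1 - a) * dot r x p - d * dot r g x + d * (1 - a) * dot r p p - d ^ 2 * dot r g p.
Proof. unfold dot, vadd, vscale; induction r; simpl; [ring| rewrite IHr; ring]. Qed.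

Lemma exp_tt r p g d a : dot r (fun i => (1 - a) * p i - d * g i) (fun i => (1 - a) * p i - d * g i) =
  (1 - a) ^ 2 * dot r p p - 2 * d * (1 - a) * dot r g p + d ^ 2 * dot r g g.
Proof. unfold dot; induction r; simpl; [ring| rewrite IHr; ring]. Qed.

Lemma exp_pp r p d : dot r (vscale d p) (vscale d p) = d ^ 2 * dot r p p.
Proof. unfold dot, vscale; induction r; simpl; [ring| rewrite IHr; ring]. Qed.

Theorem lemma1 (r : nat) (gamma : R) (V : vec -> R) (D : list nat -> vec -> R)
  (nu alpha beta delta : R) :
  le 1 r -> 0 < gamma ->
  AssumptionA1 r V D nu -> AssumptionA2 r V D gamma alpha beta ->
  step_cond gamma nu beta delta ->
  let c := (1 - gamma * delta / 2) / (1 - gamma * delta) in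
  exists eps C1 : R, 0 < eps /\ 0 < C1 /\
    forall (xi0 rho0 : vec) (eta : nat -> vec) (k : nat),
      let xi := fst (uld D gamma delta xi0 rho0 eta k) in
      let rho := snd (uld D gamma delta xi0 rho0 eta k) in
      let xi' := fst (uld D gamma delta xi0 rho0 eta (S k)) in
      let tau := fun i => (1 - gamma * delta) * rho i - delta * grad D xi i in
      Gamma r V gamma c xi' tau
        <= (1 - eps * gamma * delta) * Gamma r V gamma c xi rho + C1.
Proof.
  intros Hr Hg HA1 HA2 HS c.
  pose proof HA1 as [HV [[Hnu _] _]].
  destruct HA2 as [Hal [Hb HA2]].
  destruct HS as [Hd [Hd1 [Hd2 Hd3]]].
  set (Cb := Cbeta beta) in *.
  set (Dc := gamma ^ 4 * Cb / nu ^ 2) in *.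
  set (a := gamma * delta) in *.
  assert (HCb : 0 < Cb).
  { unfold Cb, Cbeta. apply Rdiv_lt_0_compat; [apply Rmult_lt_0_compat|]; lra. }
  assert (HDc : 0 < Dc).
  { unfold Dc. apply Rdiv_lt_0_compat; [apply Rmult_lt_0_compat; [apply pow_lt|]|apply pow_lt]; lra. }
  set (w := sqrt (Dc ^ 2 + 1)).
  assert (Hw2 : w * w = Dc ^ 2 + 1) by (apply sqrt_sqrt; nra).
  assert (Hw0 : 0 <= w) by apply sqrt_pos.
  assert (HwD : Dc < w) by nra.
  assert (Has : a <= Dc + 1 - w).
  { unfold a. apply Rmult_le_reg_r with (r := / gamma); [apply Rinv_0_lt_compat; lra|].
    replace (gamma * delta * / gamma) with delta by (field; lra). exact Hd3. }
  assert (Ha0 : 0 < a) by (unfold a; apply Rmult_lt_0_compat; lra).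
  assert (Ha1 : a < 1) by lra.
  assert (Hc : c * (1 - a) = 1 - a / 2) by (unfold c; field; lra).
  assert (Hc2 : c >= 1 + a / 2).
  { apply Rle_ge. apply Rmult_le_reg_r with (r := 1 - a); [lra|]. rewrite Hc. assert (0 <= a * a) by nra. lra. }
  assert (Hca : c * a <= Dc).
  { apply Rmult_le_reg_r with (r := 1 - a); [lra|].
    replace (c * a * (1 - a)) with (a * (1 - a / 2)) by (rewrite <- Hc; ring).
    set (s := Dc + 1 - w) in *.
    assert (s * s / 2 - (Dc + 1) * s + Dc = 0) by (unfold s; nra).
    assert (0 <= (s - a) * ((Dc + 1) - (a + s) / 2)) by (apply Rmult_le_pos; unfold s in *; lra).
    nra. }
  assert (HD : c * delta ^ 2 * nu ^ 2 <= a * gamma ^ 2 * Cb).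
  { assert (HDn : Dc * nu ^ 2 = gamma ^ 4 * Cb) by (unfold Dc; field; lra).
    apply Rmult_le_reg_r with (r := gamma); [lra|].
    replace (c * delta ^ 2 * nu ^ 2 * gamma) with ((c * a) * (delta * nu ^ 2)) by (unfold a; ring).
    replace (a * gamma ^ 2 * Cb * gamma) with (Dc * (delta * nu ^ 2)) by (transitivity (Dc * nu ^ 2 * delta); [ring| rewrite HDn; unfold a; ring]).
    apply Rmult_le_compat_r; [|exact Hca]. apply Rmult_le_pos; [lra| apply pow_le; lra]. }
  assert (Hnd : nu * delta <= gamma / 2).
  { apply Rmult_le_compat_l with (r := nu) in Hd2; [|lra].
    replace (nu * (gamma / (2 * nu))) with (gamma / 2) in Hd2 by (field; lra). exact Hd2. }
  set (eps := Rmin (Rmin (Cb / 2) beta) (/ (2 * c + 1))).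
  assert (He1 : eps <= Cb / 2) by (unfold eps; eapply Rle_trans; [apply Rmin_l| apply Rmin_l]).
  assert (He2 : eps <= beta) by (unfold eps; eapply Rle_trans; [apply Rmin_l| apply Rmin_r]).
  assert (He3 : eps * (2 * c + 1) <= 1).
  { assert (eps <= / (2 * c + 1)) by (unfold eps; apply Rmin_r).
    apply Rmult_le_compat_r with (r := 2 * c + 1) in H; [|lra].
    rewrite Rinv_l in H by lra. exact H. }
  assert (He0 : 0 < eps).
  { unfold eps. apply Rmin_glb_lt; [apply Rmin_glb_lt|]; try lra. apply Rinv_0_lt_compat; lra. }
  set (G0 := dot r (grad D z0) (grad D z0)).
  assert (HG0 : 0 <= G0) by apply dot_nonneg.
  exists eps, (1 + a * alpha + 3 / 2 * c * delta ^ 2 * G0).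
  split; [exact He0|]. split.
  { assert (0 <= c * delta ^ 2 * G0) by (apply Rmult_le_pos; [apply Rmult_le_pos; [lra| apply pow_le; lra]| lra]).
    assert (0 < a * alpha) by (apply Rmult_lt_0_compat; lra). lra. }
  intros xi0 rho0 eta k xi rho xi' tau.
  unfold xi', tau, xi, rho. simpl uld.
  destruct (uld D gamma delta xi0 rho0 eta k) as [x p]. simpl fst; simpl snd.
  unfold Gamma. rewrite !norm_sq, exp_yy, exp_yt, exp_tt.
  assert (HT := taylor r V D nu x (vscale delta p) HA1).
  replace (pt x (vscale delta p) 1) with (vadd x (vscale delta p)) in HT
    by (apply functional_extensionality; intro; unfold pt, vadd, vscale; ring).
  rewrite dot_scale_r, exp_pp in HT.
  assert (HGG := grad_growth r V D nu x HA1). fold G0 in HGG.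
  assert (Ham := dot_amgm r x p gamma Hg).
  assert (Hxp : gamma * dot r x p <= (gamma ^ 2 * dot r x x + dot r p p) / 2).
  { apply Rmult_le_compat_l with (r := gamma / 2) in Ham; [|lra].
    replace (gamma / 2 * (gamma * dot r x x + / gamma * dot r p p)) with ((gamma ^ 2 * dot r x x + dot r p p) / 2) in Ham by (field; lra).
    lra. }
  specialize (HA2 x). rewrite norm_sq in HA2.
  assert (Hfin := final_ineq gamma delta nu beta alpha Cb c eps (dot r x x) (dot r p p) (dot r x p)
     (dot r (grad D x) x) (dot r (grad D x) p) (dot r (grad D x) (grad D x)) G0 (V x)
     (V (vadd x (vscale delta p))) Hg Hd Ha1 Hc Hc2 Hnd Hnu HD He0 He1 He2 He3
     (dot_nonneg r x) (dot_nonneg r p) (HV x) HG0 ltac:(lra) ltac:(lra) HGG Hxp).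
  unfold a in *. lra.
Qed.
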